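(* Let $(U,\mathcal{S})$ be a set system with $|\mathcal{S}|=m$, let $\epsilon\in(0,1)$, $0<\delta<1/e$, and $\epsilon'=\epsilon/(2\ln(e/\delta))$. Consider the algorithm that, on a private set $R\subseteq U$, sets $R_1=R$, $\mathcal{S}_1=\mathcal{S}$ and for $i=1,\dots,m$: picks a set $S\in\mathcal{S}_i$ with probability proportional to $\exp(\epsilon'|S\cap R_i|)$, outputs $S$, and sets $R_{i+1}=R_i\setminus S$, $\mathcal{S}_{i+1}=\mathcal{S}_i\setminus\{S\}$ (so the output is a permutation of $\mathcal{S}$). Then this algorithm is $(\epsilon,\delta)$-differentially private: for any $A,B\subseteq U$ with symmetric difference of size one and any set $\mathcal{P}$ of outputs, $\Pr[M(A)\in\mathcal{P}]\le e^{\epsilon}\Pr[M(B)\in\mathcal{P}]+\delta$. *)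

(* Defs.v *)
From HB Require Import structures.
From mathcomp Require Import all_boot all_order all_algebra all_fingroup.
From mathcomp Require Import reals.
From mathcomp.analysis Require Import sequences exp.
Set Implicit Arguments. Unset Strict Implicit. Unset Printing Implicit Defensive.
Import Order.TTheory GRing.Theory Num.Theory.
Local Open Scope ring_scope.

(* An output of the algorithm is an ordering of
   S, represented by a permutation pi of 'I_m: the set output at step i
   (0-based) is S (pi i). *)

Section Mech.
Variables (R : realType) (U : finType) (m : nat) (S : 'I_m -> {set U}).

(* indices still available at step i (S_{i+1} in the paper, 0-based here) *)
Definition remaining (pi : {perm 'I_m}) (i : nat) : {set 'I_m} :=
  [set pi j | j : 'I_m & i <= j]%N.

Definition residual (X : {set U}) (pi : {perm 'I_m}) (i : nat) : {set U} :=
  X :\: \bigcup_(j : 'I_m | (j < i)%N) S (pi j).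

Definition weight (eps' : R) (Y : {set U}) (k : 'I_m) : R :=
  expR (eps' * #|S k :&: Y|%:R).

Definition mech_prob (eps' : R) (X : {set U}) (pi : {perm 'I_m}) : R :=
  \prod_(i < m)
    (weight eps' (residual X pi i) (pi i) /
     \sum_(k in remaining pi i) weight eps' (residual X pi i) k).

Definition mech_Pr (eps' : R) (X : {set U}) (P : {set {perm 'I_m}}) : R :=
  \sum_(pi in P) mech_prob eps' X pi.
End Mech.

(* Main.v *)
Require Import Defs.
From HB Require Import structures.
From mathcomp Require Import all_boot all_order all_algebra all_fingroup.
From mathcomp Require Import reals.
From mathcomp.analysis Require Import sequences exp.
Import Order.TTheory GRing.Theory Num.Theory.
Local Open Scope ring_scope.
From mathcomp Require Import ring lra.
Set Implicit Arguments. Unset Strict Implicit. Unset Printing Implicit Defensive.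

Section S.
Variables (R : Type) (idx : R) (op : Monoid.com_law idx) (m : nat).

Lemma idx_enum : index_enum 'I_m = enum 'I_m.
Proof. by rewrite [index_enum _]unlock -enumT. Qed.

Lemma big_take_enum i (F : 'I_m -> R) :
  \big[op/idx]_(j <- take i (enum 'I_m)) F j = \big[op/idx]_(j < m | (j < i)%N) F j.
Proof.
rewrite idx_enum -[in RHS](cat_take_drop i (enum 'I_m)) big_cat /=.
rewrite [X in _ = op _ X]big_seq_cond [X in _ = op _ X]big1 ?Monoid.mulm1.
  rewrite [RHS]big_seq_cond [LHS]big_seq_cond; apply: eq_bigl => j.
  case jt: (j \in _) => //=.
  have : val j \in map val (take i (enum 'I_m)) by apply: map_f.
  by rewrite map_take val_enum_ord take_iota mem_iota leq_min => /andP[_ /andP[]].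
move=> j /andP[jd jl]; exfalso.
have : val j \in map val (drop i (enum 'I_m)) by apply: map_f.
by rewrite map_drop val_enum_ord drop_iota mem_iota add0n leqNgt jl.
Qed.

Lemma big_drop_enum i (F : 'I_m -> R) :
  \big[op/idx]_(j <- drop i (enum 'I_m)) F j = \big[op/idx]_(j < m | (i <= j)%N) F j.
Proof.
rewrite idx_enum -[in RHS](cat_take_drop i (enum 'I_m)) big_cat /=.
rewrite [X in _ = op X _]big_seq_cond [X in _ = op X _]big1 ?Monoid.mul1m.
  rewrite [RHS]big_seq_cond [LHS]big_seq_cond; apply: eq_bigl => j.
  case jt: (j \in _) => //=.
  have : val j \in map val (drop i (enum 'I_m)) by apply: map_f.
  by rewrite map_drop val_enum_ord drop_iota mem_iota add0n => /andP[].
move=> j /andP[jd jl]; exfalso.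
have : val j \in map val (take i (enum 'I_m)) by apply: map_f.
rewrite map_take val_enum_ord take_iota mem_iota leq_min => /andP[_ /andP[h _]].
by rewrite leqNgt h in jl.
Qed.
End S.

Lemma perms_dec (R : realType) (T : eqType) (r : seq T) (Q : pred (seq T)) (F : seq T -> R) :
  uniq r -> (0 < size r)%N ->
  \sum_(t <- permutations r | Q t) F t =
  \sum_(k <- r) \sum_(t <- permutations (rem k r) | Q (k :: t)) F (k :: t).
Proof.
move=> ur sr; rewrite (perm_big _ (permutationsE sr)) undup_id //.
rewrite big_mkcond big_allpairs_dep /=; apply: eq_bigr => k _.
by rewrite [RHS]big_mkcond.
Qed.

Section Core.
Variables (R : realType) (U : finType) (m : nat) (S : 'I_m -> {set U}) (e : R).
Hypothesis e_gt0 : 0 < e.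

Local Notation w := (weight S e).

Fixpoint lp (Y : {set U}) (s : seq 'I_m) : R :=
  if s is k :: t then w Y k / (\sum_(j <- s) w Y j) * lp (Y :\: S k) t else 1.

Lemma w_gt0 Y k : 0 < w Y k.
Proof. exact: expR_gt0. Qed.

Lemma sumw_gt0 Y k t : 0 < \sum_(j <- k :: t) w Y j.
Proof.
rewrite big_cons; apply: ltr_pwDl; first exact: w_gt0.
by apply: sumr_ge0 => j _; apply: ltW; apply: w_gt0.
Qed.

Lemma lp_ge0 Y s : 0 <= lp Y s.
Proof.
elim: s Y => [|k t IH] Y /=; first exact: ler01.
apply: mulr_ge0 => //; apply: divr_ge0; first exact: ltW (w_gt0 _ _).
exact: ltW (sumw_gt0 _ _ _).
Qed.

Lemma w_mono (Y : {set U}) x k : w Y k <= w (x |: Y) k.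
Proof.
rewrite /weight ler_expR ler_pM2l // ler_nat; apply: subset_leq_card.
by apply: setIS; apply: subsetUr.
Qed.

Lemma w_in (Y : {set U}) x k : x \notin Y -> x \in S k -> w (x |: Y) k = expR e * w Y k.
Proof.
move=> xY xS; rewrite /weight -expRD; congr expR.
rewrite setIUr (setIidPr _); last by rewrite sub1set.
rewrite cardsU1 in_setI (negbTE xY) andbF /= natrD mulrDr mulr1 addrC //.
Qed.

Lemma w_out (Y : {set U}) x k : x \notin S k -> w (x |: Y) k = w Y k.
Proof.
move=> xS; rewrite /weight setIUr.
have -> : S k :&: [set x] = set0.
  by apply/setP => u; rewrite !inE; apply/andP => -[H /eqP E]; rewrite -E H in xS.
by rewrite set0U.
Qed.

Lemma w_le (Y : {set U}) x k : x \notin Y -> w (x |: Y) k <= expR e * w Y k.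
Proof.
move=> xY; case: (boolP (x \in S k)) => xS; first by rewrite w_in.
rewrite w_out //; apply: ler_peMl; first exact: ltW (w_gt0 _ _).
by rewrite -expR0 ler_expR ltW.
Qed.


Lemma sum_perm_cons (F : 'I_m -> R) r k t :
  k \in r -> t \in permutations (rem k r) ->
  \sum_(j <- k :: t) F j = \sum_(j <- r) F j.
Proof.
move=> kr; rewrite mem_permutations => ht; apply: perm_big.
rewrite perm_sym (permPl (perm_to_rem kr)) perm_cons perm_sym //.
Qed.

Lemma lp_sum n : forall r Y, size r = n -> uniq r ->
  \sum_(t <- permutations r) lp Y t = 1.
Proof.
elim: n => [|n IH] r Y hs ur.
  by case: r hs ur => // _ _; rewrite /permutations /= big_seq1.
case: r hs ur => // k0 r0 hs ur; set r := k0 :: r0.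
rewrite (@perms_dec R _ r xpredT) ?hs //.
set D := \sum_(j <- r) w Y j.
have D0 : D != 0 by apply: lt0r_neq0; apply: sumw_gt0.
transitivity (\sum_(k <- r) w Y k / D).
  rewrite big_seq [RHS]big_seq; apply: eq_bigr => k kr /=.
  rewrite big_seq.
  transitivity (\sum_(t <- permutations (rem k r)) w Y k / D * lp (Y :\: S k) t).
    rewrite [RHS]big_seq; apply: eq_bigr => t tp /=.
    by rewrite (sum_perm_cons _ kr tp).
  rewrite -mulr_sumr IH ?mulr1 //; last exact: rem_uniq.
  by rewrite size_rem // hs.
by rewrite -mulr_suml divff.
Qed.

Lemma lp_sumQ r Y (Q : pred (seq 'I_m)) : uniq r ->
  \sum_(t <- permutations r | Q t) lp Y t <= 1.
Proof.
move=> ur; rewrite -(@lp_sum (size r) r Y) //.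
rewrite [X in _ <= X](bigID Q) /= lerDl; apply: sumr_ge0 => t _; exact: lp_ge0.
Qed.

Lemma lp_extra t : forall (Y : {set U}) x, x \notin Y -> lp (x |: Y) t <= expR e * lp Y t.
Proof.
elim: t => [|k t IH] Y x xY /=.
  by rewrite mulr1 -expR0 ler_expR ltW.
have DA := sumw_gt0 Y k t.
have DB := sumw_gt0 (x |: Y) k t.
have DAB : \sum_(j <- k :: t) w Y j <= \sum_(j <- k :: t) w (x |: Y) j.
  by apply: ler_sum => j _; apply: w_mono.
case: (boolP (x \in S k)) => xS.
  have -> : (x |: Y) :\: S k = Y :\: S k.
    apply/setP => u; rewrite !inE; case: (eqVneq u x) => [->|] //=.
    by rewrite xS.
  rewrite w_in // -!mulrA; apply: ler_wpM2l; first exact: expR_ge0.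
  apply: ler_wpM2l; first exact: ltW (w_gt0 _ _).
  apply: ler_wpM2r; first exact: lp_ge0.
  by rewrite lef_pV2 ?posrE.
have -> : (x |: Y) :\: S k = x |: (Y :\: S k).
  apply/setP => u; rewrite !inE; case: (eqVneq u x) => [->|] //=.
  by rewrite xS.
have xY' : x \notin Y :\: S k by rewrite inE negb_and xY orbT.
rewrite w_out // [X in _ <= X]mulrCA -!mulrA; apply: ler_wpM2l; first exact: ltW (w_gt0 _ _).
apply: ler_pM.
- by rewrite invr_ge0 ltW.
- exact: lp_ge0.
- by rewrite lef_pV2 ?posrE.
- exact: IH.
Qed.


Definition cc := expR e - 1.
Lemma cc_gt0 : 0 < cc.
Proof. by rewrite /cc subr_gt0 expR_gt1. Qed.

Definition psi (l : R) := Order.min 1 (expR (1 - l / cc)).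

Lemma psi_le1 l : psi l <= 1.
Proof. by rewrite /psi ge_min lexx. Qed.

Lemma psi_ge0 l : 0 <= psi l.
Proof. by rewrite /psi le_min ler01 expR_ge0. Qed.

Lemma psi_neg l : l < 0 -> psi l = 1.
Proof.
move=> l0; rewrite /psi; apply/min_idPl.
rewrite -[X in X <= _]expR0 ler_expR subr_ge0 ler_pdivrMr ?cc_gt0 // mul1r.
by apply: ltW; apply: lt_trans l0 _; apply: cc_gt0.
Qed.

Lemma psi_step l s rho : 0 <= l -> 0 <= s -> s <= 1 -> rho = 1 + cc * (1 - s) ->
  s * psi (l - ln rho) <= psi l.
Proof.
move=> l0 s0 s1 ->; rewrite /psi le_min; apply/andP; split.
  by rewrite -[X in _ <= X]mul1r; apply: ler_pM => //; rewrite ?psi_ge0 ?psi_le1.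
have hc := cc_gt0.
have hl : ln (1 + cc * (1 - s)) <= cc * (1 - s).
  apply: le_ln1Dx; apply: (@lt_le_trans _ _ 0); first by rewrite oppr_lt0.
  by apply: mulr_ge0; [exact: ltW | rewrite subr_ge0].
apply: (@le_trans _ _ (s * expR (1 - (l - ln (1 + cc * (1 - s))) / cc))).
  by apply: ler_wpM2l => //; rewrite ge_min lexx orbT.
apply: (@le_trans _ _ (s * (expR (1 - l / cc) * expR (1 - s)))).
  apply: ler_wpM2l => //; rewrite -expRD ler_expR.
  have : ln (1 + cc * (1 - s)) / cc <= 1 - s by rewrite ler_pdivrMr // [_ * cc]mulrC.
  rewrite mulrBl; lra.
rewrite mulrCA -[X in _ <= X]mulr1; apply: ler_wpM2l; first exact: expR_ge0.
have := expR_ge1Dx (- (1 - s)); rewrite opprB addrCA subrr addr0 => hs.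
apply: (@le_trans _ _ (expR (s - 1) * expR (1 - s))).
  by apply: ler_wpM2r => //; apply: expR_ge0.
rewrite -expRD (_ : s - 1 + (1 - s) = 0) ?expR0 //; lra.
Qed.


Lemma inner_eq (Z : {set U}) r k (P : pred (seq 'I_m)) : k \in r ->
  \sum_(t <- permutations (rem k r) | P t) lp Z (k :: t) =
  w Z k / (\sum_(j <- r) w Z j) * \sum_(t <- permutations (rem k r) | P t) lp (Z :\: S k) t.
Proof.
move=> kr; rewrite mulr_sumr big_seq_cond [RHS]big_seq_cond; apply: eq_bigr => t /andP[tp _] /=.
by rewrite (sum_perm_cons _ kr tp).
Qed.

Lemma sumlp_ge0 Z s (P : pred (seq 'I_m)) : 0 <= \sum_(t <- s | P t) lp Z t.
Proof. by apply: sumr_ge0 => t _; apply: lp_ge0. Qed.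

Lemma lp_missing n : forall r (Y : {set U}) x l (Q : pred (seq 'I_m)),
  size r = n -> uniq r -> x \notin Y ->
  \sum_(t <- permutations r | Q t) lp Y t <=
  expR l * \sum_(t <- permutations r | Q t) lp (x |: Y) t + psi l.
Proof.
elim: n => [|n IH] r Y x l Q hs ur xY; (case: (ltrP l 0) => hl;
  [rewrite psi_neg //; apply: (le_trans (lp_sumQ _ _ ur)); rewrite lerDr;
   by apply: mulr_ge0; [exact: expR_ge0 | exact: sumlp_ge0] | ]).
  case: r hs ur => // _ _; rewrite /permutations /= !big_cons !big_nil.
  have h1 : 1 <= expR l by rewrite -expR0 ler_expR.
  have h2 := psi_ge0 l.
  by case: (Q [::]) => /=; lra.
case: r hs ur => // k0 r0 hs ur; set r := k0 :: r0.
rewrite !(@perms_dec R _ r) ?hs //.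
set DA := \sum_(j <- r) w Y j; set DB := \sum_(j <- r) w (x |: Y) j.
have DA0 : 0 < DA by apply: sumw_gt0.
have DB0 : 0 < DB by apply: sumw_gt0.
set q := \sum_(j <- r | x \notin S j) w Y j.
set a := \sum_(j <- r | x \in S j) w Y j.
have q0 : 0 <= q by apply: sumr_ge0 => j _; apply: ltW; apply: w_gt0.
have a0 : 0 <= a by apply: sumr_ge0 => j _; apply: ltW; apply: w_gt0.
have DAe : DA = a + q by rewrite /DA (bigID (fun j => x \in S j)).
have DBe : DB = expR e * a + q.
  rewrite /DB (bigID (fun j => x \in S j)) /= mulr_sumr; congr (_ + _).
    by apply: eq_bigr => j xj; rewrite w_in.
  by apply: eq_bigr => j xj; rewrite w_out.
have DBle : DB <= expR e * DA.
  rewrite DBe DAe mulrDr lerD2l -[X in X <= _]mul1r; apply: ler_wpM2r => //.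
  by rewrite -expR0 ler_expR ltW.
set rho := DB / DA.
have rhoe : rho = 1 + cc * (1 - q / DA).
  rewrite /rho /cc DBe DAe; field.
  by rewrite -DAe; apply: lt0r_neq0.
have rho0 : 0 < rho by rewrite /rho divr_gt0.
set l' := l - ln rho.
rewrite [X in _ <= expR l * X + _](_ : _ = \sum_(k <- r) w (x |: Y) k / DB *
  \sum_(t <- permutations (rem k r) | Q (k :: t)) lp ((x |: Y) :\: S k) t); last first.
  by rewrite big_seq [RHS]big_seq; apply: eq_bigr => k kr; rewrite inner_eq.
apply: (@le_trans _ _ (\sum_(k <- r) (expR l *
    (w (x |: Y) k / DB * \sum_(t <- permutations (rem k r) | Q (k :: t)) lp ((x |: Y) :\: S k) t)
    + (x \notin S k)%:R * (w Y k / DA * psi l')))).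
  rewrite big_seq [X in _ <= X]big_seq; apply: ler_sum => k kr.
  rewrite inner_eq //.
  have hwA := w_gt0 Y k.
  case: (boolP (x \in S k)) => xS /=.
    have -> : (x |: Y) :\: S k = Y :\: S k.
      apply/setP => u; rewrite !inE; case: (eqVneq u x) => [->|] //=.
      by rewrite xS.
    rewrite mul0r addr0 w_in // mulrA; apply: ler_wpM2r; first exact: sumlp_ge0.
    apply: (@le_trans _ _ (expR e * w Y k / DB)).
      rewrite ler_pdivlMr //.
      apply: (@le_trans _ _ (w Y k / DA * (expR e * DA))).
        by apply: ler_wpM2l => //; apply: divr_ge0; apply: ltW.
      rewrite (_ : w Y k / DA * (expR e * DA) = expR e * w Y k) //.
      by field; apply: lt0r_neq0.
    apply: ler_peMl.
      by rewrite divr_ge0 ?mulr_ge0 ?expR_ge0 ?ltW.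
    by rewrite -expR0 ler_expR.
  have -> : (x |: Y) :\: S k = x |: (Y :\: S k).
    apply/setP => u; rewrite !inE; case: (eqVneq u x) => [->|] //=.
    by rewrite xS.
  have xY' : x \notin Y :\: S k by rewrite inE negb_and xY orbT.
  rewrite w_out // mul1r.
  have hsz : size (rem k r) = n by rewrite size_rem // hs.
  have hIH := IH (rem k r) (Y :\: S k) x l' (fun t => Q (k :: t)) hsz (rem_uniq k ur) xY'.
  apply: (@le_trans _ _ (w Y k / DA * (expR l' *
      \sum_(t <- permutations (rem k r) | Q (k :: t)) lp (x |: (Y :\: S k)) t + psi l'))).
    by apply: ler_wpM2l => //; apply: divr_ge0; apply: ltW.
  rewrite mulrDr mulrA.
  have -> : w Y k / DA * expR l' = expR l * (w Y k / DB).
    rewrite /l' expRB lnK ?posrE // /rho; field.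
    by apply/andP; split; apply: lt0r_neq0.
  by rewrite -[X in X + _ <= _]mulrA.
rewrite big_split /= -mulr_sumr lerD2l.
apply: (@le_trans _ _ (q / DA * psi l')).
  rewrite /q big_mkcond /= !mulr_suml le_eqVlt; apply/orP; left; apply/eqP; rewrite [RHS]big_mkcond; apply: eq_bigr => i _.
  by case: (x \notin S i); rewrite ?mul1r ?mul0r.
apply: psi_step => //; first by apply: divr_ge0 => //; apply: ltW.
  by rewrite ler_pdivrMr // mul1r DAe lerDr.
Qed.


Lemma lp_prod (x0 : 'I_m) s : forall Y, lp Y s = \prod_(i < size s)
  (w (Y :\: \bigcup_(j <- take i s) S j) (nth x0 s i) /
   \sum_(k <- drop i s) w (Y :\: \bigcup_(j <- take i s) S j) k).
Proof.
elim: s => [|k t IH] Y /=; first by rewrite big_ord0.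
rewrite big_ord_recl /= big_nil setD0 IH; congr (_ * _).
apply: eq_bigr => i _ /=; rewrite big_cons setDDl //.
Qed.

Lemma mech_lp X (pi : {perm 'I_m}) :
  mech_prob S e X pi = lp X [seq pi i | i <- enum 'I_m].
Proof.
case: (posnP m) => [m0 | mpos].
  have -> : enum 'I_m = [::] by apply: size0nil; rewrite size_enum_ord.
  by rewrite /mech_prob /=; apply: big1 => i; exfalso; move: (ltn_ord i); rewrite [X in (_ < X)%N]m0.
pose x0 := Ordinal mpos.
rewrite (lp_prod x0) size_map size_enum_ord /mech_prob; apply: eq_bigr => i _.
have -> : nth x0 [seq pi i0 | i0 <- enum 'I_m] i = pi i.
  by rewrite (nth_map x0) ?size_enum_ord // nth_ord_enum.
have -> : X :\: \bigcup_(j <- take i [seq pi i0 | i0 <- enum 'I_m]) S j = residual S X pi i.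
  by rewrite -map_take big_map big_take_enum.
congr (_ / _).
rewrite -map_drop big_map big_drop_enum /remaining big_imset /=; last first.
  by move=> a b _ _; apply: perm_inj.
by apply: eq_bigl => j; rewrite inE.
Qed.

Definition phi (pi : {perm 'I_m}) := [seq pi i | i <- enum 'I_m].

Lemma phi_inj : injective phi.
Proof.
move=> p1 p2 /eq_in_map H; apply/permP => i; apply: H; exact: mem_enum.
Qed.

Lemma phi_perm pi : phi pi \in permutations (enum 'I_m).
Proof.
rewrite mem_permutations; apply: uniq_perm.
- by rewrite map_inj_uniq ?enum_uniq //; apply: perm_inj.
- exact: enum_uniq.
move=> j; rewrite mem_enum; apply/mapP; exists (pi^-1 j)%g; first by rewrite mem_enum.
by rewrite permKV.
Qed.

Lemma mech_Pr_lp X P :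
  mech_Pr S e X P = \sum_(t <- permutations (enum 'I_m) | t \in map phi (enum P)) lp X t.
Proof.
rewrite /mech_Pr -big_enum /=.
rewrite (eq_bigr (fun pi => lp X (phi pi))); last by move=> pi _; rewrite mech_lp.
rewrite -(big_map phi xpredT) -[RHS]big_filter; apply: perm_big; apply: uniq_perm.
- by rewrite map_inj_uniq ?enum_uniq //; apply: phi_inj.
- by apply: filter_uniq; apply: permutations_uniq.
move=> t; rewrite mem_filter; case tL: (t \in _) => //=.
by case/mapP: tL => pi _ ->; rewrite phi_perm.
Qed.

End Core.


Unset Implicit Arguments. Set Strict Implicit. Set Printing Implicit Defensive.

Theorem mainTheorem10 (R : realType) (U : finType) (m : nat)
  (S : 'I_m -> {set U}) (injS : injective S)
  (eps delta : R) (heps0 : 0 < eps) (heps1 : eps < 1)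
  (hdelta0 : 0 < delta) (hdelta1 : delta < (expR 1)^-1) :
  let eps' := eps / (2 * ln (expR 1 / delta)) in
  forall (A B : {set U}), #|(A :\: B) :|: (B :\: A)| = 1%N ->
  forall P : {set {perm 'I_m}},
    mech_Pr S eps' A P <= expR eps * mech_Pr S eps' B P + delta.
Proof.
move=> eps' A B hAB P.
pose L := ln (expR 1 / delta).
have LE : L = 1 - ln delta by rewrite /L ln_div ?posrE ?expR_gt0 // expRK.
have lnd : ln delta < -1.
  by rewrite -(expRK (-1)) ltr_ln ?posrE ?expR_gt0 // expRN.
have L2 : 2 < L by rewrite LE; lra.
have eL : eps' * (2 * L) = eps by rewrite /eps' -/L; field; lra.
have e0 : 0 < eps' by rewrite /eps' -/L divr_gt0 //; lra.
have e14 : eps' < 1 / 4 by nra.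
have /cards1P [x hx] : #|(A :\: B) :|: (B :\: A)| == 1%N by rewrite hAB.
have memx u : ((u \in A) && (u \notin B)) || ((u \in B) && (u \notin A)) = (u == x).
  by have := congr1 (fun D : {set U} => u \in D) hx; rewrite !inE andbC [(u \notin A) && _]andbC.
have Sge0 X (Q : pred (seq 'I_m)) : 0 <= \sum_(t <- permutations (enum 'I_m) | Q t) lp S eps' X t.
  exact: sumlp_ge0.
case: (boolP (x \in A)) => xA.
  have xB : x \notin B.
    by apply/negP => xB; have := memx x; rewrite xA xB eqxx.
  have -> : A = x |: B.
    apply/setP => u; rewrite !inE; have := memx u.
    case: (eqVneq u x) => [-> _|_]; first by rewrite xA.
    by case: (u \in A); case: (u \in B).
  rewrite !mech_Pr_lp.
  apply: (@le_trans _ _ (expR eps' *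
     \sum_(t <- permutations (enum 'I_m) | t \in map (phi (m:=m)) (enum P)) lp S eps' B t)).
    by rewrite mulr_sumr; apply: ler_sum => t _; apply: lp_extra.
  apply: ler_wpDr; first exact: ltW.
  apply: ler_wpM2r; first exact: Sge0.
  rewrite ler_expR; nra.
have xB : x \in B.
  by have := memx x; rewrite eqxx (negbTE xA) /= andbT.
have -> : B = x |: A.
  apply/setP => u; rewrite !inE; have := memx u.
  case: (eqVneq u x) => [-> _|_]; first by rewrite xB.
  by case: (u \in A); case: (u \in B).
rewrite !mech_Pr_lp.
apply: le_trans (lp_missing S e0 eps _ (erefl _) (enum_uniq _) xA) _.
rewrite lerD2l.
apply: (@le_trans _ _ (expR (1 - eps / cc eps'))).
  by rewrite /psi ge_min lexx orbT.
have hX := expR_gt0 eps'.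
have h1 := expR_ge1Dx (- eps').
have XY : expR (- eps') * expR eps' = 1 by rewrite -expRD addNr expR0.
have h2 : (1 - eps') * expR eps' <= 1 by nra.
have h3 : expR eps' <= 1 + 2 * eps' by nra.
have hc : cc eps' <= 2 * eps' by rewrite /cc; lra.
have hc0 : 0 < cc eps' by apply: cc_gt0.
have hL : L <= eps / cc eps'.
  rewrite ler_pdivlMr //; nra.
apply: (@le_trans _ _ (expR (ln delta))).
  rewrite ler_expR; lra.
by rewrite lnK ?posrE.
Qed.
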